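(* Assume Assumption A holds, and let $\mu\in\mathcal{M}$. Then there exists an $S$-valued process $(\mathbf{t}_n)_{n\ge1}$, possibly defined on an enlargement of the probability space carrying the state process $(\mathbf{s}_n)_{n\ge1}$, such that: (P1) for every $n$, conditional on $\mathbf{s}_n$, the vector $(\mathbf{t}_1,\dots,\mathbf{t}_n)$ is independent of $(\mathbf{s}_{n+1},\mathbf{s}_{n+2},\dots)$; (P2) the law of the sequence $(\mathbf{t}_n)_n$ equals the law of the sequence $(\mathbf{s}_n)_n$; (P3) for each $n$, the law of the pair $(\mathbf{s}_n,\mathbf{t}_n)$ is $\mu$; (P4) for each $n$, the conditional law of $\mathbf{s}_n$ given $(\mathbf{t}_1,\dots,\mathbf{t}_n)$ is $\mu(\cdot\mid\mathbf{t}_n)$.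
   Context: $S$ is a finite set; $(\mathbf{s}_n)_{n\ge1}$ is an irreducible aperiodic Markov chain on $S$ with transition function $p(\cdot\mid\cdot)$, invariant measure $m$ (with full support), and $\mathbf{s}_1\sim m$. Assumption A: there exist nonnegative numbers $\alpha_s$, $s\in S$, with $\sum_{s\in S\setminus\{\bar s\}}\alpha_s\le1$ for every $\bar s\in S$, such that $p(s'\mid s)=\alpha_{s'}$ whenever $s'\neq s$. $\mathcal{M}$ is the set of probability distributions $\mu$ on $S\times S$ both of whose marginals equal $m$; $\mu(s\mid t)=\mu(s,t)/m(t)$. *)

(* Defs.v *)
From HB Require Import structures.
From mathcomp Require Import all_boot all_order all_algebra.
From mathcomp Require Import reals.
Set Implicit Arguments. Unset Strict Implicit. Unset Printing Implicit Defensive.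
Import Order.TTheory GRing.Theory Num.Theory.
Local Open Scope ring_scope.

Section Defs.
Variables (R : realType) (S : finType).

(* Convention: [p x y] is the transition probability p(y | x). *)
Definition stochastic (p : S -> S -> R) :=
  (forall x y, 0 <= p x y) /\ (forall x, \sum_(y : S) p x y = 1).

Fixpoint npow (p : S -> S -> R) (n : nat) (x y : S) : R :=
  match n with
  | 0 => (x == y)%:R
  | k.+1 => \sum_(z : S) npow p k x z * p z y
  end.

Definition irreducible (p : S -> S -> R) :=
  forall x y, exists n, 0 < npow p n x y.

Definition aperiodic (p : S -> S -> R) :=
  forall x (d : nat), (forall n, (0 < n)%N -> 0 < npow p n x x -> (d %| n)%N) -> d = 1%N.

Definition invariant_measure (p : S -> S -> R) (m : S -> R) :=
  (forall x, 0 <= m x) /\ \sum_(x : S) m x = 1 /\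
  (forall y, \sum_(x : S) m x * p x y = m y).

Definition full_support (m : S -> R) := forall x, 0 < m x.

Definition assumptionA (p : S -> S -> R) :=
  exists alpha : S -> R,
    (forall s, 0 <= alpha s) /\
    (forall sbar, \sum_(s : S | s != sbar) alpha s <= 1) /\
    (forall s s', s' != s -> p s s' = alpha s').

Definition in_M (m : S -> R) (mu : S -> S -> R) :=
  (forall x y, 0 <= mu x y) /\
  (forall x, \sum_(y : S) mu x y = m x) /\
  (forall y, \sum_(x : S) mu x y = m y).

Definition mu_cond (m : S -> R) (mu : S -> S -> R) (s t : S) : R := mu s t / m t.

Fixpoint chain_from (p : S -> S -> R) (x : S) (r : seq S) : R :=
  match r with
  | [::] => 1
  | y :: r' => p x y * chain_from p y r'
  end.

Definition path_prob (p : S -> S -> R) (m : S -> R) (r : seq S) : R :=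
  match r with
  | [::] => 1
  | x :: r' => m x * chain_from p x r'
  end.

Definition markov_law (p : S -> S -> R) (m : S -> R) (N : nat)
  (x : {ffun 'I_N -> S}) : R := path_prob p m [seq x i | i <- enum 'I_N].

(* A joint law of the pair process (s_n, t_n)_{n>=1} given through its
   finite-dimensional distributions: q N w = P((s_k, t_k)_{k < N} = w)
   (indices shifted by one: index 0 is time 1). *)
Definition joint_fdd := forall N : nat, {ffun 'I_N -> S * S} -> R.

Definition Pr (q : joint_fdd) (N : nat) (E : pred {ffun 'I_N -> S * S}) : R :=
  \sum_(w : {ffun 'I_N -> S * S} | E w) q N w.

Definition is_consistent_law (q : joint_fdd) :=
  (forall N w, 0 <= q N w) /\
  (forall N (w : {ffun 'I_N -> S * S}),
     q N w = Pr q [pred w' : {ffun 'I_N.+1 -> S * S} |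
                   [forall i : 'I_N, w' (widen_ord (leqnSn N) i) == w i]]).

End Defs.

(* Main.v *)
Require Import Defs.
From HB Require Import structures.
From mathcomp Require Import all_boot all_order all_algebra.
From mathcomp Require Import reals.
From mathcomp Require Import ring lra.
Set Implicit Arguments. Unset Strict Implicit. Unset Printing Implicit Defensive.
Import Order.TTheory GRing.Theory Num.Theory.
Local Open Scope ring_scope.

Section Gen.
Variables (R : realType) (T : finType).

Definition seqf N (w : {ffun 'I_N -> T}) := [seq w i | i <- enum 'I_N].
Definition initf n (w : {ffun 'I_n.+1 -> T}) : {ffun 'I_n -> T} :=
  [ffun i => w (widen_ord (leqnSn n) i)].
Definition extf n (w : {ffun 'I_n -> T}) (z : T) : {ffun 'I_n.+1 -> T} :=
  [ffun i => if unlift ord_max i is Some j then w j else z].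

Lemma widen_lift n (i : 'I_n) : widen_ord (leqnSn n) i = lift ord_max i.
Proof. by apply: val_inj; rewrite /= /bump leqNgt ltn_ord. Qed.

Lemma extf_widen n (w : {ffun 'I_n -> T}) z i : extf w z (widen_ord (leqnSn n) i) = w i.
Proof. by rewrite ffunE widen_lift liftK. Qed.

Lemma extf_lift n (w : {ffun 'I_n -> T}) z i : extf w z (lift ord_max i) = w i.
Proof. by rewrite ffunE liftK. Qed.

Lemma extf_max n (w : {ffun 'I_n -> T}) z : extf w z ord_max = z.
Proof. by rewrite ffunE unlift_none. Qed.

Lemma initf_extf n (w : {ffun 'I_n -> T}) z : initf (extf w z) = w.
Proof. by apply/ffunP => i; rewrite ffunE extf_widen. Qed.

Lemma extf_initf n (w : {ffun 'I_n.+1 -> T}) : extf (initf w) (w ord_max) = w.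
Proof.
apply/ffunP => i; rewrite ffunE; case: unliftP => [j ->|->] //.
by rewrite ffunE widen_lift.
Qed.

Lemma seqf_extf n (w : {ffun 'I_n -> T}) z : seqf (extf w z) = rcons (seqf w) z.
Proof.
rewrite /seqf enum_ordSr map_rcons -map_comp extf_max; congr rcons.
by apply: eq_map => i /=; rewrite extf_widen.
Qed.

Lemma seqf0 (w : {ffun 'I_0 -> T}) : seqf w = [::].
Proof. by rewrite /seqf enum_ord0. Qed.

Lemma sum_peel n (F : {ffun 'I_n.+1 -> T} -> R) :
  \sum_(w : {ffun 'I_n.+1 -> T}) F w =
  \sum_(w : {ffun 'I_n -> T}) \sum_(z : T) F (extf w z).
Proof.
rewrite pair_big /=.
rewrite (reindex (fun p : {ffun 'I_n -> T} * T => extf p.1 p.2)) //=.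
exists (fun w => (initf w, w ord_max)) => [[w z] _ | w _] /=.
  by rewrite initf_extf extf_max.
by rewrite extf_initf.
Qed.

Lemma sum_ffun0 (F : {ffun 'I_0 -> T} -> R) w0 :
  \sum_(w : {ffun 'I_0 -> T}) F w = F w0.
Proof.
rewrite (bigD1 w0) //= big1 ?addr0 // => w /eqP[]; by apply/ffunP => -[].
Qed.

Lemma chain_rcons (P : T -> T -> R) x r y :
  chain_from P x (rcons r y) = chain_from P x r * P (last x r) y.
Proof.
elim: r x => [|a r IH] x /=; first by rewrite mulr1 mul1r.
by rewrite IH mulrA.
Qed.

Lemma path_rcons2 (P : T -> T -> R) (m0 : T -> R) s y z :
  path_prob P m0 (rcons (rcons s y) z) = path_prob P m0 (rcons s y) * P y z.
Proof.
case: s => [|x s] /=; first by rewrite !mulr1.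
by rewrite chain_rcons last_rcons mulrA.
Qed.


Variables (f : T -> R) (K : T -> T -> R).

Fixpoint fv (A : nat -> pred T) (n : nat) (z : T) : R :=
  match n with
  | 0 => (z \in A 0)%:R * f z
  | k.+1 => (z \in A k.+1)%:R * \sum_y fv A k y * K y z
  end.

Definition core (A : nat -> pred T) (n : nat) (z : T) : R :=
  match n with
  | 0 => f z
  | k.+1 => \sum_y fv A k y * K y z
  end.

Lemma fvE A n z : fv A n z = (z \in A n)%:R * core A n z.
Proof. by case: n. Qed.

Definition qW N (w : {ffun 'I_N -> T}) : R := path_prob K f (seqf w).

Lemma forall_extf n (A : nat -> pred T) (w : {ffun 'I_n -> T}) z :
  [forall i : 'I_n.+1, extf w z i \in A i] = [forall i : 'I_n, w i \in A i] && (z \in A n).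
Proof.
apply/forallP/andP => [H|[/forallP H Hz] i].
  split; last by have := H ord_max; rewrite extf_max.
  by apply/forallP => i; have := H (lift ord_max i); rewrite extf_lift /= /bump leqNgt ltn_ord.
case: (unliftP ord_max i) => [j ->|->]; last by rewrite extf_max.
by rewrite extf_lift /= /bump leqNgt ltn_ord.
Qed.

Lemma qW_ext n (w : {ffun 'I_n.+1 -> T}) z :
  qW (extf w z) = qW w * K (w ord_max) z.
Proof.
rewrite /qW seqf_extf -{1}(extf_initf w) seqf_extf path_rcons2.
by rewrite -seqf_extf extf_initf.
Qed.

Lemma fv_sum (A : nat -> pred T) n (G : T -> R) :
  \sum_(w : {ffun 'I_n.+1 -> T} | [forall i, w i \in A i]) qW w * G (w ord_max) =
  \sum_z fv A n z * G z.
Proof.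
elim: n G => [|n IH] G.
  rewrite big_mkcond sum_peel (sum_ffun0 _ (ffun0 (card_ord 0))) /=.
  apply: eq_bigr => z _; rewrite forall_extf extf_max /qW seqf_extf seqf0 /=.
  have -> : [forall i, ffun0 (card_ord 0) i \in A i] by apply/forallP => -[].
  by case: (z \in A 0); rewrite /= ?mul1r ?mul0r ?mulr1.
rewrite big_mkcond sum_peel.
transitivity (\sum_(w : {ffun 'I_n.+1 -> T} | [forall i, w i \in A i])
   qW w * (\sum_z (z \in A n.+1)%:R * K (w ord_max) z * G z)).
  rewrite [RHS]big_mkcond; apply: eq_bigr => w _.
  case: ifP => Hw; last first.
    by apply: big1 => z _; rewrite forall_extf Hw.
  rewrite big_distrr; apply: eq_bigr => z _.
  rewrite forall_extf Hw /= qW_ext extf_max.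
  by case: (z \in A n.+1) => /=; ring.
rewrite (IH (fun y => \sum_z (z \in A n.+1)%:R * K y z * G z)).
under eq_bigr do rewrite big_distrr.
rewrite exchange_big; apply: eq_bigr => z _ /=.
rewrite big_distrr big_distrl /=; apply: eq_bigr => y _.
ring.
Qed.

Lemma fv_tail (A : nat -> pred T) i d :
  (forall z, \sum_y K z y = 1) ->
  (forall k, (i < k)%N -> forall z, z \in A k) ->
  \sum_z fv A (i + d) z = \sum_z fv A i z.
Proof.
move=> K1 HA; elim: d => [|d IH]; first by rewrite addn0.
rewrite addnS /= -IH.
have HA' z : z \in A (i + d).+1 by apply: HA; rewrite ltnS leq_addr.
under eq_bigr do rewrite HA' mul1r.
rewrite exchange_big; apply: eq_bigr => y _ /=.
by rewrite -big_distrr /= K1 mulr1.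
Qed.

Lemma fv_local (A A' : nat -> pred T) n :
  (forall k, (k <= n)%N -> A k =i A' k) -> fv A n =1 fv A' n.
Proof.
elim: n => [|n IH] H z /=; first by rewrite H.
rewrite H //; congr (_ * _); apply: eq_bigr => y _.
by rewrite IH // => k Hk; apply: H; rewrite (leq_trans Hk).
Qed.

Lemma core_local (A A' : nat -> pred T) n :
  (forall k, (k < n)%N -> A k =i A' k) -> core A n =1 core A' n.
Proof.
case: n => [|n] H z //=; apply: eq_bigr => y _.
by rewrite (@fv_local A A').
Qed.

Lemma core_stat (A : nat -> pred T) n :
  (forall z', \sum_z f z * K z z' = f z') ->
  (forall k, (k < n)%N -> forall z, z \in A k) -> core A n =1 f.
Proof.
move=> Hs; elim: n => [|n IH] H z //=.
rewrite -Hs; apply: eq_bigr => y _.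
by rewrite fvE H // IH ?mul1r // => k Hk z'; apply: H; rewrite ltnS ltnW.
Qed.

End Gen.


Lemma sum_ind (R : realType) (I : finType) (a : I) (F : I -> R) :
  \sum_x (x == a)%:R * F x = F a.
Proof.
rewrite (bigD1 a) //= big1 ?addr0 ?eqxx ?mul1r // => x /negbTE ->.
by rewrite mul0r.
Qed.

Lemma sum_ind' (R : realType) (I : finType) (a : I) (F : I -> R) :
  \sum_x (a == x)%:R * F x = F a.
Proof. by rewrite -(sum_ind a); apply: eq_bigr => x _; rewrite eq_sym. Qed.

Lemma sumT (R : realType) (S : finType) (F : S * S -> R) :
  \sum_z F z = \sum_s \sum_t F (s, t).
Proof. by rewrite pair_bigA; apply: eq_bigr => -[]. Qed.

Section Main.
Variables (R : realType) (S : finType) (p : S -> S -> R) (m : S -> R) (mu : S -> S -> R).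
Hypotheses (Hp : stochastic p) (Hm : invariant_measure p m) (Hfull : full_support m)
  (HA : assumptionA p) (Hmu : in_M m mu).

Lemma p_ge0 x y : 0 <= p x y. Proof. by case: Hp. Qed.
Lemma p_sum x : \sum_y p x y = 1. Proof. by case: Hp. Qed.
Lemma m_gt0 x : 0 < m x. Proof. exact: Hfull. Qed.
Lemma m_neq0 x : m x != 0. Proof. by rewrite gt_eqF ?m_gt0. Qed.
Lemma m_inv y : \sum_x m x * p x y = m y. Proof. by case: Hm => _ []. Qed.
Lemma m_sum : \sum_x m x = 1. Proof. by case: Hm => _ []. Qed.
Lemma mu_ge0 x y : 0 <= mu x y. Proof. by case: Hmu. Qed.
Lemma mu_sumr x : \sum_y mu x y = m x. Proof. by case: Hmu => _ []. Qed.
Lemma mu_suml y : \sum_x mu x y = m y. Proof. by case: Hmu => _ []. Qed.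

Definition D t s' := \sum_x mu x t * p x s'.

Lemma D_ge0 t s' : 0 <= D t s'.
Proof. by apply: sumr_ge0 => x _; rewrite mulr_ge0 ?mu_ge0 ?p_ge0. Qed.

Lemma KI t s' : \sum_t' m t * p t t' * mu s' t' / m t' = D t s'.
Proof.
case: HA => alpha [Hal [Hsum Heq]].
pose beta := \sum_y alpha y.
have pE x y : p x y = alpha y + (x == y)%:R * (1 - beta).
  have [->|nxy] := eqVneq x y; last by rewrite Heq 1?eq_sym // mul0r addr0.
  have H1 := p_sum y; rewrite (bigD1 y) //= in H1.
  have H2 : \sum_(z | z != y) p y z = \sum_(z | z != y) alpha z.
    by apply: eq_bigr => z Hz; rewrite Heq.
  have H3 : beta = alpha y + \sum_(z | z != y) alpha z by rewrite /beta (bigD1 y).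
  rewrite mul1r; lra.
have aE y : alpha y = beta * m y.
  have := m_inv y.
  rewrite (eq_bigr (fun x => m x * alpha y + (x == y)%:R * (m x * (1 - beta)))); last first.
    by move=> x _; rewrite pE; ring.
  rewrite big_split /= -big_distrl /= m_sum sum_ind; lra.
clearbody beta.
transitivity (\sum_t' (m t * beta * mu s' t' + (t == t')%:R * ((1 - beta) * mu s' t'))).
  apply: eq_bigr => t' _; rewrite pE aE.
  have [<-|] := eqVneq t t'; last by move=> _; rewrite !mul0r !addr0; field; apply: m_neq0.
  rewrite /= mul1r; field; apply: m_neq0.
rewrite big_split /= -big_distrr /= mu_sumr sum_ind'.
rewrite /D (eq_bigr (fun x => mu x t * alpha s' + (x == s')%:R * (mu x t * (1 - beta)))); last first.
  by move=> x _; rewrite pE; ring.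
rewrite big_split /= -big_distrl /= mu_suml sum_ind aE; ring.
Qed.


Definition kap t s' t' :=
  if D t s' == 0 then (t' == t)%:R else m t * p t t' * mu s' t' / (m t' * D t s').

Definition K (z z' : S * S) := p z.1 z'.1 * kap z.2 z'.1 z'.2.
Definition fm (z : S * S) := mu z.1 z.2.

Lemma kap_ge0 t s' t' : 0 <= kap t s' t'.
Proof.
rewrite /kap; case: ifP => _; first by rewrite ler0n.
by rewrite divr_ge0 ?mulr_ge0 ?p_ge0 ?mu_ge0 ?D_ge0 // ltW ?m_gt0.
Qed.

Lemma K_ge0 z z' : 0 <= K z z'.
Proof. by rewrite mulr_ge0 ?p_ge0 ?kap_ge0. Qed.

Lemma fm_ge0 z : 0 <= fm z. Proof. exact: mu_ge0. Qed.

Lemma kap_sum t s' : \sum_t' kap t s' t' = 1.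
Proof.
have [HD|HD] := eqVneq (D t s') 0; rewrite /kap ?HD ?eqxx ?(negbTE HD).
  by have := sum_ind t (fun _ => (1:R)); under eq_bigr do rewrite mulr1.
transitivity (\sum_t' (m t * p t t' * mu s' t' / m t') / D t s').
  by apply: eq_bigr => t' _; field; rewrite m_neq0 HD.
by rewrite -big_distrl /= KI divff.
Qed.

Lemma K2 z s' : \sum_t' K z (s', t') = p z.1 s'.
Proof. by rewrite /K /= -big_distrr /= kap_sum mulr1. Qed.

Lemma K1 z : \sum_z' K z z' = 1.
Proof. by rewrite sumT; under eq_bigr do rewrite K2; rewrite p_sum. Qed.

Lemma K4 t s' t' : \sum_s mu s t * K (s, t) (s', t') = m t * p t t' * mu s' t' / m t'.
Proof.
rewrite /K /= (eq_bigr (fun s => mu s t * p s s' * kap t s' t')); last by move=> s _; rewrite mulrA.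
rewrite -big_distrl /= -/(D t s') /kap; case: ifP => [/eqP HD|/negbT HD].
  rewrite HD mul0r; apply/esym.
  have := @psumr_eq0P R _ predT (fun t' => m t * p t t' * mu s' t' / m t').
  move=> /(_ _ _ t') -> //; first by move=> x _; rewrite divr_ge0 ?mulr_ge0 ?p_ge0 ?mu_ge0 // ltW ?m_gt0.
  by rewrite KI HD.
by field; rewrite m_neq0 HD.
Qed.

Lemma Kstat z' : \sum_z fm z * K z z' = fm z'.
Proof.
case: z' => s' t'; rewrite sumT exchange_big /=.
under eq_bigr do rewrite K4.
rewrite /fm /= -big_distrl /= -big_distrl /= m_inv; field; exact: m_neq0.
Qed.

Lemma fm_sum : \sum_z fm z = 1.
Proof. by rewrite sumT -m_sum; apply: eq_bigr => s _; rewrite mu_sumr. Qed.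


Lemma natr_true : (true%:R : R) = 1. Proof. by []. Qed.
Lemma natr_false : (false%:R : R) = 0. Proof. by []. Qed.

Definition PP (a : nat -> S) n := path_prob p m [seq a k | k <- iota 0 n.+1].

Lemma iotaSr0 k : iota 0 k.+1 = rcons (iota 0 k) k.
Proof. by rewrite -addn1 iotaD cats1. Qed.

Lemma PP_S a n : PP a n.+1 = PP a n * p (a n) (a n.+1).
Proof. by rewrite /PP iotaSr0 map_rcons iotaSr0 map_rcons path_rcons2 -map_rcons -iotaSr0. Qed.

Lemma fv_tpath (A : nat -> pred (S * S)) (a : nat -> S) n :
  (forall k, (k <= n)%N -> forall z, (z \in A k) = (z.2 == a k)) ->
  forall s t, fv fm K A n (s, t) = (t == a n)%:R * PP a n * mu s t / m t.
Proof.
elim: n => [|n IH] H s t /=.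
  rewrite H // /= /PP /= /fm /=; have [->|_] := eqVneq t (a 0%N).
    have -> : (true%:R : R) = 1 by []. by rewrite !mul1r mulr1 mulrAC divff ?mul1r // m_neq0.
  by rewrite !mul0r.
rewrite H // /= sumT exchange_big /=.
transitivity ((t == a n.+1)%:R * \sum_(t0 : S) (t0 == a n)%:R * (PP a n / m t0 * \sum_s0 mu s0 t0 * K (s0, t0) (s, t))).
  congr (_ * _); apply: eq_bigr => t0 _; rewrite big_distrr big_distrr /=.
  apply: eq_bigr => s0 _; rewrite IH; first by ring.
  by move=> k Hk; apply: H; rewrite ltnW.
rewrite sum_ind K4 PP_S; have [->|_] := eqVneq t (a n.+1).
  by rewrite natr_true; field; rewrite !m_neq0.
by rewrite natr_false !mul0r.
Qed.


Definition g (A : nat -> pred (S * S)) k s := \sum_t fv fm K A k (s, t).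

Lemma fv_sumg A n : \sum_z fv fm K A n z = \sum_s g A n s.
Proof. exact: sumT. Qed.

Lemma g_step (A : nat -> pred (S * S)) k (B : pred S) :
  (forall z, (z \in A k.+1) = (z.1 \in B)) ->
  forall s', g A k.+1 s' = (s' \in B)%:R * \sum_s g A k s * p s s'.
Proof.
move=> H s'; rewrite /g /=.
under eq_bigr do rewrite H /=.
rewrite -big_distrr /=; congr (_ * _).
rewrite exchange_big /=.
under eq_bigr do rewrite -big_distrr /= K2 /=.
rewrite sumT; apply: eq_bigr => s _; rewrite big_distrl.
by apply: eq_bigr.
Qed.

Lemma g_ratio (A A' : nat -> pred (S * S)) i (Bs : nat -> pred S) c c' :
  (forall k, (i < k)%N -> forall z,
     ((z \in A k) = (z.1 \in Bs k)) /\ ((z \in A' k) = (z.1 \in Bs k))) ->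
  (forall s, g A i s * c' = g A' i s * c) ->
  forall d s, g A (i + d) s * c' = g A' (i + d) s * c.
Proof.
move=> H H0; elim=> [|d IH] s; first by rewrite addn0.
have Hk : (i < (i + d).+1)%N by rewrite ltnS leq_addr.
rewrite addnS (@g_step A _ (Bs (i + d).+1)); last by move=> z; case: (H _ Hk z).
rewrite (@g_step A' _ (Bs (i + d).+1)); last by move=> z; case: (H _ Hk z).
rewrite -!mulrA; congr (_ * _); rewrite !big_distrl; apply: eq_bigr => s0 _ /=.
by rewrite mulrAC IH mulrAC.
Qed.

Lemma g_spath (A : nat -> pred (S * S)) (x : nat -> S) n :
  (forall k, (k <= n)%N -> forall z, (z \in A k) = (z.1 == x k)) ->
  forall s, g A n s = (s == x n)%:R * PP x n.
Proof.
elim: n => [|n IH] H s.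
  rewrite /g /=; under eq_bigr do rewrite H //=.
  rewrite -big_distrr /= /fm /= mu_sumr /PP /= mulr1.
  by have [->|_] := eqVneq s (x 0%N); rewrite ?natr_true ?natr_false ?mul1r ?mul0r.
rewrite (@g_step A n (pred1 (x n.+1))); last by move=> z; rewrite H.
have IH' : forall s, g A n s = (s == x n)%:R * PP x n.
  by apply: IH => k Hk z; apply: H; rewrite ltnW.
under eq_bigr do rewrite IH' -mulrA.
rewrite sum_ind PP_S /=.
rewrite inE; have [->|_] := eqVneq s (x n.+1); by rewrite ?natr_true ?natr_false ?mul1r ?mul0r.
Qed.


Definition q : joint_fdd R S := fun N w => qW fm K w.

Lemma chain_ge0 x r : 0 <= chain_from K x r.
Proof. by elim: r x => [|y r IH] x //=; rewrite mulr_ge0 ?K_ge0. Qed.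

Lemma qW_ge0 N (w : {ffun 'I_N -> S * S}) : 0 <= qW fm K w.
Proof. by rewrite /qW; case: (seqf w) => [|x r] //=; rewrite mulr_ge0 ?fm_ge0 ?chain_ge0. Qed.

Lemma Pr_fv n (E : pred {ffun 'I_n.+1 -> S * S}) (A : nat -> pred (S * S)) :
  (forall w, E w = [forall i, w i \in A i]) -> Pr q E = \sum_z fv fm K A n z.
Proof.
move=> H; rewrite /Pr /q (eq_bigl _ _ H).
have H2 := fv_sum fm K A n (fun _ => 1).
under eq_bigr do rewrite -[qW fm K _]mulr1.
rewrite H2; apply: eq_bigr => z _; exact: mulr1.
Qed.

Lemma fv_statC (A : nat -> pred (S * S)) i :
  (forall k, (k < i)%N -> forall z, z \in A k) ->
  forall z, fv fm K A i z = (z \in A i)%:R * fm z.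
Proof. by move=> H z; rewrite fvE (core_stat Kstat H). Qed.

Lemma fv_tpathC (A : nat -> pred (S * S)) (a : nat -> S) (C : pred (S * S)) i :
  (forall k, (k <= i)%N -> forall z, (z \in A k) = (z.2 == a k) && ((k == i) ==> C z)) ->
  forall s t, fv fm K A i (s, t) = (C (s, t))%:R * ((t == a i)%:R * PP a i * mu s t / m t).
Proof.
move=> H s t.
pose A0 : nat -> pred (S * S) := fun k z => z.2 == a k.
have Hc : core fm K A i (s, t) = core fm K A0 i (s, t).
  apply: core_local => k Hk z.
  by rewrite H ?(ltnW Hk) // (ltn_eqF Hk) /= andbT.
have Ht := @fv_tpath A0 a i (fun k _ z => erefl) s t.
rewrite fvE Hc; rewrite fvE in Ht; rewrite -Ht H // eqxx /=.
have -> : ((s, t) \in A0 i) = (t == a i) by [].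
by case: (t == a i); case: (C (s, t)); rewrite /= ?natr_true ?natr_false ?mul1r ?mul0r.
Qed.

Lemma sum_tail_stat n i (A : nat -> pred (S * S)) :
  (i <= n)%N -> (forall k, k != i -> forall z, z \in A k) ->
  \sum_z fv fm K A n z = \sum_z (z \in A i)%:R * fm z.
Proof.
move=> Hin H; rewrite -(subnKC Hin) fv_tail //; last 2 first.
- exact: K1.
- by move=> k Hk z; apply: H; rewrite gtn_eqF.
by apply: eq_bigr => z _; rewrite fv_statC // => k Hk; apply: H; rewrite ltn_eqF.
Qed.

Lemma sum_tail_tpath n i (A : nat -> pred (S * S)) (a : nat -> S) (C : pred (S * S)) :
  (i <= n)%N ->
  (forall k, (k <= i)%N -> forall z, (z \in A k) = (z.2 == a k) && ((k == i) ==> C z)) ->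
  (forall k, (i < k)%N -> forall z, z \in A k) ->
  \sum_z fv fm K A n z = \sum_s (C (s, a i))%:R * PP a i * mu s (a i) / m (a i).
Proof.
move=> Hin H1 H2; rewrite -(subnKC Hin) fv_tail //; last exact: K1.
rewrite sumT; apply: eq_bigr => s _.
under eq_bigr do rewrite (fv_tpathC H1).
transitivity (\sum_t (t == a i)%:R * ((C (s, t))%:R * PP a i * mu s t / m t)).
  by apply: eq_bigr => t _; ring.
by rewrite sum_ind.
Qed.


Lemma map_enum_inord n (x : {ffun 'I_n.+1 -> S}) :
  [seq x i | i <- enum 'I_n.+1] = [seq x (inord k) | k <- iota 0 n.+1].
Proof. by rewrite -val_enum_ord -map_comp; apply: eq_map => i /=; rewrite inord_val. Qed.

Lemma forall_at n (i : 'I_n) (Q : pred 'I_n) : Q i = [forall j, (j == i) ==> Q j].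
Proof.
apply/idP/forallP => [Hi j|H]; first by apply/implyP => /eqP ->.
by have /implyP := H i; apply.
Qed.

Lemma forall_and (I : finType) (P Q : pred I) :
  [forall j, P j] && [forall j, Q j] = [forall j, P j && Q j].
Proof.
apply/andP/forallP => [[/forallP H1 /forallP H2] j|H]; first by rewrite H1 H2.
by split; apply/forallP => j; case/andP: (H j).
Qed.

Lemma cons_q : is_consistent_law q.
Proof.
split; first by move=> N w; exact: qW_ge0.
move=> N w; rewrite /Pr /q.
transitivity (\sum_(w' : {ffun 'I_N -> S * S}) (w' == w)%:R * \sum_z qW fm K (extf w' z)).
  rewrite sum_ind.
  case: N w => [|n] w.
    under eq_bigr do rewrite /qW seqf_extf seqf0 /= mulr1.
    by rewrite fm_sum /qW seqf0.
  under eq_bigr do rewrite qW_ext.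
  by rewrite -big_distrr /= K1 mulr1.
rewrite [RHS]big_mkcond sum_peel; apply: eq_bigr => w' _.
rewrite big_distrr; apply: eq_bigr => z _ /=.
have -> : [forall i, extf w' z (widen_ord (leqnSn N) i) == w i] = (w' == w).
  apply/forallP/eqP => [Hw|-> i]; last by rewrite extf_widen.
  by apply/ffunP => i; have /eqP := Hw i; rewrite extf_widen.
by case: (w' == w); rewrite ?natr_true ?natr_false ?mul1r ?mul0r.
Qed.

Lemma smarg N (x : {ffun 'I_N -> S}) :
  Pr q [pred w : {ffun 'I_N -> S * S} | [forall i, (w i).1 == x i]] = markov_law p m x.
Proof.
case: N x => [|n] x.
  rewrite /Pr /q big_mkcond (sum_ffun0 _ (ffun0 (card_ord 0))) /=.
  have -> : [forall i : 'I_0, ((ffun0 (card_ord 0) : {ffun 'I_0 -> S * S}) i).1 == x i].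
    by apply/forallP => -[].
  by rewrite /qW seqf0 /markov_law enum_ord0.
rewrite (@Pr_fv n _ (fun k => [pred z : S * S | z.1 == x (inord k)])); last first.
  by move=> w; apply: eq_forallb => i; rewrite inE inord_val.
rewrite fv_sumg.
have Hg := @g_spath (fun k => [pred z : S * S | z.1 == x (inord k)]) (fun k => x (inord k)) n (fun k _ z => erefl).
under eq_bigr do rewrite Hg.
by rewrite sum_ind /markov_law map_enum_inord.
Qed.


Lemma P2q N (y : {ffun 'I_N -> S}) :
  Pr q [pred w : {ffun 'I_N -> S * S} | [forall i, (w i).2 == y i]] = markov_law p m y.
Proof.
case: N y => [|n] y.
  rewrite /Pr /q big_mkcond (sum_ffun0 _ (ffun0 (card_ord 0))) /=.
  have -> : [forall i : 'I_0, ((ffun0 (card_ord 0) : {ffun 'I_0 -> S * S}) i).2 == y i].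
    by apply/forallP => -[].
  by rewrite /qW seqf0 /markov_law enum_ord0.
pose A := fun k => [pred z : S * S | (k <= n)%N ==> (z.2 == y (inord k))].
rewrite (@Pr_fv n _ A); last first.
  by move=> w; apply: eq_forallb => i; rewrite inE -ltnS ltn_ord inord_val.
rewrite (@sum_tail_tpath n n A (fun k => y (inord k)) (fun _ => true)) //; first last.
- by move=> k Hk z; rewrite inE leqNgt Hk.
- by move=> k Hk z; rewrite inE Hk implybT andbT.
under eq_bigr do rewrite natr_true mul1r mulrAC.
rewrite -big_distrr /= mu_suml mulfVK ?m_neq0 //.
by rewrite /markov_law map_enum_inord.
Qed.

Lemma P3q N (i : 'I_N) (x y : S) :
  Pr q [pred w : {ffun 'I_N -> S * S} | w i == (x, y)] = mu x y.
Proof.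
case: N i => [|n] i; first by case: i.
pose A := fun k : nat => [pred z : S * S | (k == val i)%N ==> (z == (x, y))].
rewrite (@Pr_fv n _ A); last first.
  by move=> w; rewrite /= (forall_at i (fun j => w j == (x, y))).
have Hin : (i <= n)%N by rewrite -ltnS ltn_ord.
rewrite (@sum_tail_stat n i A) //; last first.
  by move=> k Hk z; rewrite inE (negbTE Hk).
under eq_bigr do rewrite inE eqxx /=.
by rewrite sum_ind.
Qed.


Lemma Pr_ext N (E1 E2 : pred {ffun 'I_N -> S * S}) : E1 =1 E2 -> Pr q E1 = Pr q E2.
Proof. by move=> H; rewrite /Pr (eq_bigl _ _ H). Qed.

Lemma PrX n (i : 'I_n.+1) x :
  Pr q [pred w : {ffun 'I_n.+1 -> S * S} | (w i).1 == x] = m x.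
Proof.
pose A := fun k : nat => [pred z : S * S | (k == val i)%N ==> (z.1 == x)].
rewrite (@Pr_fv n _ A); last first.
  by move=> w; rewrite /= (forall_at i (fun j => (w j).1 == x)).
have Hin : (i <= n)%N by rewrite -ltnS ltn_ord.
rewrite (@sum_tail_stat n i A) //; last first.
  by move=> k Hk z; rewrite inE (negbTE Hk).
under eq_bigr do rewrite inE eqxx /=.
rewrite sumT /fm /=; under eq_bigr do rewrite -big_distrr /= mu_sumr.
by rewrite sum_ind.
Qed.

Lemma PrAX n (i : 'I_n.+1) (a : {ffun 'I_n.+1 -> S}) x :
  Pr q [pred w : {ffun 'I_n.+1 -> S * S} |
         [forall j : 'I_n.+1, (j <= i)%N ==> ((w j).2 == a j)] && ((w i).1 == x)]
  = PP (fun k => a (inord k)) i * mu x (a i) / m (a i).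
Proof.
pose A := fun k : nat => [pred z : S * S |
  ((k <= i)%N ==> (z.2 == a (inord k))) && ((k == val i)%N ==> (z.1 == x))].
rewrite (@Pr_fv n _ A); last first.
  move=> w; rewrite /= (forall_at i (fun j => (w j).1 == x)) forall_and.
  by apply: eq_forallb => j; rewrite inE inord_val.
have Hin : (i <= n)%N by rewrite -ltnS ltn_ord.
rewrite (@sum_tail_tpath n i A (fun k => a (inord k)) (fun z => z.1 == x)) //; first last.
- by move=> k Hk z; rewrite inE leqNgt Hk (gtn_eqF Hk).
- by move=> k Hk z; rewrite inE Hk.
transitivity (\sum_s (s == x)%:R * (PP (fun k => a (inord k)) i * mu s (a (inord i)) / m (a (inord i)))).
  by apply: eq_bigr => s _ /=; ring.
by rewrite sum_ind inord_val.
Qed.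

Lemma PrA0 n (i : 'I_n.+1) (a : {ffun 'I_n.+1 -> S}) :
  Pr q [pred w : {ffun 'I_n.+1 -> S * S} |
         [forall j : 'I_n.+1, (j <= i)%N ==> ((w j).2 == a j)]]
  = PP (fun k => a (inord k)) i.
Proof.
pose A := fun k : nat => [pred z : S * S | (k <= i)%N ==> (z.2 == a (inord k))].
rewrite (@Pr_fv n _ A); last first.
  by move=> w; apply: eq_forallb => j; rewrite inE inord_val.
have Hin : (i <= n)%N by rewrite -ltnS ltn_ord.
rewrite (@sum_tail_tpath n i A (fun k => a (inord k)) (fun _ => true)) //; first last.
- by move=> k Hk z; rewrite inE leqNgt Hk.
- by move=> k Hk z; rewrite inE Hk implybT andbT.
under eq_bigr do rewrite natr_true mul1r mulrAC.
by rewrite -big_distrr /= mu_suml mulfVK ?m_neq0.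
Qed.

Lemma P4q N (i : 'I_N) (a : {ffun 'I_N -> S}) (x : S) :
  Pr q [pred w : {ffun 'I_N -> S * S} | ((w i).1 == x) &&
                 [forall j : 'I_N, (j <= i)%N ==> ((w j).2 == a j)]]
  = mu_cond m mu x (a i) *
    Pr q [pred w : {ffun 'I_N -> S * S} | [forall j : 'I_N, (j <= i)%N ==> ((w j).2 == a j)]].
Proof.
case: N i a => [|n] i a; first by case: i.
rewrite (@Pr_ext _ _ [pred w : {ffun 'I_n.+1 -> S * S} |
         [forall j : 'I_n.+1, (j <= i)%N ==> ((w j).2 == a j)] && ((w i).1 == x)]); last first.
  by move=> w; rewrite /= andbC.
rewrite PrAX PrA0 /mu_cond; field; exact: m_neq0.
Qed.


Lemma P1q N (i : 'I_N) (a b : {ffun 'I_N -> S}) (x : S) :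
       let A := fun w : {ffun 'I_N -> S * S} =>
                  [forall j : 'I_N, (j <= i)%N ==> ((w j).2 == a j)] in
       let X := fun w : {ffun 'I_N -> S * S} => (w i).1 == x in
       let B := fun w : {ffun 'I_N -> S * S} =>
                  [forall j : 'I_N, (i < j)%N ==> ((w j).1 == b j)] in
       Pr q [pred w : {ffun 'I_N -> S * S} | [&& A w, X w & B w]] * Pr q [pred w : {ffun 'I_N -> S * S} | X w]
       = Pr q [pred w : {ffun 'I_N -> S * S} | A w && X w] * Pr q [pred w : {ffun 'I_N -> S * S} | X w && B w].
Proof.
case: N i a b => [|n] i a b; first by case: i.
move=> A X B; rewrite /A /X /B {A X B}.
rewrite PrX PrAX.
set c := PP (fun k => a (inord k)) i * mu x (a i) / m (a i).
pose AXB := fun k : nat => [pred z : S * S | [&& (k <= i)%N ==> (z.2 == a (inord k)),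
   (k == val i)%N ==> (z.1 == x) & (i < k)%N ==> (z.1 == b (inord k))]].
pose XB := fun k : nat => [pred z : S * S |
   ((k == val i)%N ==> (z.1 == x)) && ((i < k)%N ==> (z.1 == b (inord k)))].
rewrite (@Pr_fv n _ AXB); last first.
  move=> w; rewrite /= (forall_at i (fun j => (w j).1 == x)) !forall_and.
  by apply: eq_forallb => j; rewrite inE !inord_val.
rewrite (@Pr_fv n _ XB); last first.
  move=> w; rewrite /= (forall_at i (fun j => (w j).1 == x)) !forall_and.
  by apply: eq_forallb => j; rewrite inE !inord_val.
have Hin : (i <= n)%N by rewrite -ltnS ltn_ord.
have Hr := @g_ratio AXB XB i (fun k => pred1 (b (inord k))) c (m x).
rewrite !fv_sumg big_distrl [RHS]mulrC big_distrl /=.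
rewrite -(subnKC Hin); apply: eq_bigr => s _; apply: Hr.
  by move=> k Hk z; rewrite !inE leqNgt Hk (gtn_eqF Hk).
move=> s0; rewrite /g.
have H1 : forall k, (k <= i)%N -> forall z, (z \in AXB k) = (z.2 == a (inord k)) && ((k == i) ==> (z.1 == x)).
  by move=> k Hk z; rewrite inE Hk ltnNge Hk /= andbT.
under eq_bigr do rewrite (fv_tpathC H1).
have H2 : forall k, (k < i)%N -> forall z, z \in XB k.
  by move=> k Hk z; rewrite inE (ltn_eqF Hk) ltnNge (ltnW Hk).
under [in RHS]eq_bigr do rewrite (fv_statC H2).
have HX : forall t, ((s0, t) \in XB i) = (s0 == x).
  by move=> t; rewrite inE eqxx ltnn /= andbT.
under [in RHS]eq_bigr do rewrite HX.
rewrite -big_distrr /= /fm /= mu_sumr /=.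
transitivity ((s0 == x)%:R * (PP (fun k => a (inord k)) i * mu s0 (a i) / m (a i)) * m x).
  congr (_ * _); rewrite -big_distrr /=; congr (_ * _).
  transitivity (\sum_t (t == a (inord i))%:R * (PP (fun k => a (inord k)) i * mu s0 t / m t)).
    by apply: eq_bigr => t _; ring.
  by rewrite sum_ind inord_val.
rewrite /c; have [->|_] := eqVneq s0 x; last by rewrite natr_false !mul0r.
rewrite natr_true; ring.
Qed.

End Main.

Unset Implicit Arguments.
Set Strict Implicit.
Theorem lemma4 (R : realType) (S : finType) (p : S -> S -> R) (m : S -> R)
  (mu : S -> S -> R) :
  stochastic p -> irreducible p -> aperiodic p ->
  invariant_measure p m -> full_support m ->
  assumptionA p -> in_M m mu ->
  exists q : joint_fdd R S,
    is_consistent_law q /\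
    (* the s-component is the given Markov chain (enlargement) *)
    (forall N (x : {ffun 'I_N -> S}),
       Pr q [pred w : {ffun 'I_N -> S * S} | [forall i, (w i).1 == x i]] = markov_law p m x) /\
    (* (P1) *)
    (forall N (i : 'I_N) (a b : {ffun 'I_N -> S}) (x : S),
       let A := fun w : {ffun 'I_N -> S * S} =>
                  [forall j : 'I_N, (j <= i)%N ==> ((w j).2 == a j)] in
       let X := fun w : {ffun 'I_N -> S * S} => (w i).1 == x in
       let B := fun w : {ffun 'I_N -> S * S} =>
                  [forall j : 'I_N, (i < j)%N ==> ((w j).1 == b j)] in
       Pr q [pred w : {ffun 'I_N -> S * S} | [&& A w, X w & B w]] * Pr q [pred w : {ffun 'I_N -> S * S} | X w]
       = Pr q [pred w : {ffun 'I_N -> S * S} | A w && X w] * Pr q [pred w : {ffun 'I_N -> S * S} | X w && B w]) /\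
    (* (P2) *)
    (forall N (y : {ffun 'I_N -> S}),
       Pr q [pred w : {ffun 'I_N -> S * S} | [forall i, (w i).2 == y i]] = markov_law p m y) /\
    (* (P3) *)
    (forall N (i : 'I_N) (x y : S),
       Pr q [pred w : {ffun 'I_N -> S * S} | w i == (x, y)] = mu x y) /\
    (* (P4) *)
    (forall N (i : 'I_N) (a : {ffun 'I_N -> S}) (x : S),
       Pr q [pred w : {ffun 'I_N -> S * S} | ((w i).1 == x) &&
                      [forall j : 'I_N, (j <= i)%N ==> ((w j).2 == a j)]]
       = mu_cond m mu x (a i) *
         Pr q [pred w : {ffun 'I_N -> S * S} | [forall j : 'I_N, (j <= i)%N ==> ((w j).2 == a j)]]).
Proof.
move=> Hp _ _ Hm Hfull HA Hmu.
exists (@q R S p m mu).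
split; first by apply: cons_q.
split; first by move=> N x; apply: smarg.
split; first by move=> N i a b x; apply: P1q.
split; first by move=> N y; apply: P2q.
split; first by move=> N i x y; apply: P3q.
by move=> N i a x; apply: P4q.
Qed.
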